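(* Let $\Theta(t;\lambda)$ ($t\in\mathbb{R}$, $\lambda\ge0$) be a threshold function, i.e. for every $\lambda\ge0$: (1) $\Theta(-t;\lambda)=-\Theta(t;\lambda)$; (2) $\Theta(t;\lambda)\le\Theta(t';\lambda)$ for $t\le t'$; (3) $\lim_{t\to\infty}\Theta(t;\lambda)=\infty$; (4) $0\le\Theta(t;\lambda)\le t$ for $0\le t<\infty$. For $u\ge0$ define $\Theta^{-1}(u;\lambda)=\sup\{t:\Theta(t;\lambda)\le u\}$, $s(u;\lambda)=\Theta^{-1}(u;\lambda)-u$, and $P_\Theta(\theta;\lambda)=\int_0^{|\theta|}s(u;\lambda)\,du$. Let $P(\cdot;\cdot)$ be any function such that $P(\theta;\lambda)-P(0;\lambda)=P_\Theta(\theta;\lambda)+q(\theta;\lambda)$, where $q(\cdot;\lambda)\ge0$ and $q(\Theta(\theta;\lambda);\lambda)=0$ for all $\theta$. Let $\mathbf{X}\in\mathbb{R}^{n\times p}$ have full column rank $p$, $\mathbf{y}\in\mathbb{R}^n$, $\lambda_1,\dots,\lambda_n\ge0$, and define $$f_P(\boldsymbol\beta,\boldsymbol\gamma)=\frac12\|\mathbf{y}-\mathbf{X}\boldsymbol\beta-\boldsymbol\gamma\|_2^2+\sum_{i=1}^n P(\gamma_i;\lambda_i).$$ Consider the $\Theta$-IPOD iteration: starting from any $\boldsymbol\gamma^{(0)}\in\mathbb{R}^n$, for $j\ge0$ set $\boldsymbol\beta^{(j)}=(\mathbf{X}^\top\mathbf{X})^{-1}\mathbf{X}^\top(\mathbf{y}-\boldsymbol\gamma^{(j)})$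 and $\gamma^{(j+1)}_i=\Theta(y_i-\mathbf{x}_i^\top\boldsymbol\beta^{(j)};\lambda_i)$ for each $i$. Then for every $j\ge0$, $$f_P(\boldsymbol\beta^{(j)},\boldsymbol\gamma^{(j)})\ge f_P(\boldsymbol\beta^{(j)},\boldsymbol\gamma^{(j+1)})\ge f_P(\boldsymbol\beta^{(j+1)},\boldsymbol\gamma^{(j+1)}).$$
   Context: $\mathbf{x}_i^\top$ denotes the $i$-th row of $\mathbf{X}$. The iteration alternates an ordinary least squares fit of $\mathbf{y}-\boldsymbol\gamma$ on $\mathbf{X}$ with componentwise thresholding of the residuals. *)

(* Defs.v *)
From HB Require Import structures.
From mathcomp Require Import all_boot all_order all_algebra.
From mathcomp Require Import all_classical all_reals all_analysis.
Set Implicit Arguments. Unset Strict Implicit. Unset Printing Implicit Defensive.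
Import Order.TTheory GRing.Theory Num.Theory.
Import numFieldNormedType.Exports.
Local Open Scope classical_set_scope.
Local Open Scope ring_scope.

Section Defs.
Variable R : realType.

Definition is_threshold (Theta : R -> R -> R) : Prop :=
  forall l : R, 0 <= l ->
    [/\ (forall t, Theta (- t) l = - Theta t l),
        (forall t t', t <= t' -> Theta t l <= Theta t' l),
        (fun t => Theta t l) @ +oo --> +oo
      & (forall t, 0 <= t -> 0 <= Theta t l <= t)].

Definition Theta_inv (Theta : R -> R -> R) (u l : R) : R :=
  sup [set t | Theta t l <= u].

Definition s_fun (Theta : R -> R -> R) (u l : R) : R := Theta_inv Theta u l - u.

Definition P_Theta (Theta : R -> R -> R) (theta l : R) : R :=
  Rintegral lebesgue_measure `[0, `|theta|] (fun u => s_fun Theta u l).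

Variables (n p : nat).

Definition f_P (P : R -> R -> R) (X : 'M[R]_(n, p)) (y : 'cV[R]_n)
    (lam : 'I_n -> R) (beta : 'cV[R]_p) (gam : 'cV[R]_n) : R :=
  2^-1 * \sum_(i < n) ((y - X *m beta - gam) i 0) ^+ 2
  + \sum_(i < n) P (gam i 0) (lam i).

Definition ols_beta (X : 'M[R]_(n, p)) (y gam : 'cV[R]_n) : 'cV[R]_p :=
  invmx (X^T *m X) *m (X^T *m (y - gam)).

Fixpoint ipod_gamma (Theta : R -> R -> R) (X : 'M[R]_(n, p)) (y : 'cV[R]_n)
    (lam : 'I_n -> R) (gam0 : 'cV[R]_n) (j : nat) : 'cV[R]_n :=
  match j with
  | 0%N => gam0
  | j'.+1 =>
      let b := ols_beta X y (ipod_gamma Theta X y lam gam0 j') in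
      \col_i Theta ((y - X *m b) i 0) (lam i)
  end.

Definition ipod_beta (Theta : R -> R -> R) (X : 'M[R]_(n, p)) (y : 'cV[R]_n)
    (lam : 'I_n -> R) (gam0 : 'cV[R]_n) (j : nat) : 'cV[R]_p :=
  ols_beta X y (ipod_gamma Theta X y lam gam0 j).

End Defs.

(* Main.v *)
Set Warnings "-all".
Require Import Defs.
From HB Require Import structures.
From mathcomp Require Import all_boot all_order all_algebra.
From mathcomp Require Import all_classical all_reals all_analysis.
Import Order.TTheory GRing.Theory Num.Theory.
Local Open Scope ring_scope.
From mathcomp Require Import ring lra.
Import numFieldNormedType.Exports.

Section lin.
Variable R : realType.
Local Open Scope classical_set_scope.
Notation mu := (@lebesgue_measure R).

Definition Fq (c : R) : R -> R := 2^-1 *: ((@id R - cst c) ^+ 2).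

Lemma Fq_E c u : Fq c u = 2^-1 * (u - c) ^+ 2.
Proof. by rewrite /Fq /= !fctE. Qed.

Lemma deriv_quad (c x : R) : is_derive x 1 (Fq c) (x - c).
Proof.
have h1 : is_derive x 1 (@id R - cst c) (1 - 0).
  apply: is_deriveB.
have h2 := is_deriveX 2 h1.
have h3 := is_deriveZ (2^-1) h2.
apply: is_derive_eq.
rewrite subr0 /= !fctE. 
rewrite expr1 scalerA mulrA mulVf ?pnatr_eq0 // mul1r; exact: mulr1.
Qed.
Lemma Fq_cont c x : {for x, continuous (Fq c)}.
Proof.
apply: differentiable_continuous; apply/derivable1_diffP.
exact: (@ex_derive _ _ _ _ _ _ _ (deriv_quad c x)).
Qed.

Lemma Rint_lin (a b c : R) : a <= b ->
  \int[mu]_(u in `[a, b]) (u - c) = Fq c b - Fq c a.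
Proof.
rewrite le_eqVlt => /predU1P[<-|ab].
  by rewrite set_itv1 Rintegral_set1 subrr.
rewrite /Rintegral (@continuous_FTC2 _ _ (Fq c)) //=.
- apply: continuous_subspaceT => x.
  by apply: cvgB; [exact: cvg_id|exact: cvg_cst].
- split.
  + move=> x _; exact: (@ex_derive _ _ _ _ _ _ _ (deriv_quad c x)).
  + apply: cvg_at_right_filter; exact: Fq_cont.
  + apply: cvg_at_left_filter; exact: Fq_cont.
- move=> x _; rewrite derive1E; exact: (@derive_val _ _ _ _ _ _ _ (deriv_quad c x)).
Qed.

Section thr.
Variables (Th : R -> R).
Hypotheses (Hodd : forall t, Th (- t) = - Th t)
  (Hmono : forall t t', t <= t' -> Th t <= Th t')
  (Hcvg : Th @ +oo --> +oo)
  (Hbnd : forall t, 0 <= t -> 0 <= Th t <= t).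

Let Tinv (u : R) : R := sup [set t | Th t <= u].

Lemma Th0 : Th 0 = 0.
Proof. by have /andP[h1 h2] := @Hbnd 0 (lexx 0); apply/eqP; rewrite eq_le h1 h2. Qed.

Lemma ub_set u : has_ubound [set t | Th t <= u].
Proof.
have := (proj1 (cvgryPgt Th)) Hcvg u.
case=> M [_ HM]; exists M => t /= Ht.
rewrite leNgt; apply/negP => /HM; by rewrite ltNge Ht.
Qed.

Lemma ne_set u : 0 <= u -> [set t | Th t <= u] !=set0.
Proof. by move=> u0; exists 0; rewrite /= Th0. Qed.

Lemma Tinv_ge r u : Th r <= u -> r <= Tinv u.
Proof. by move=> h; apply: (ub_le_sup (ub_set u)). Qed.

Lemma Tinv_le r u : 0 <= u -> u < Th r -> Tinv u <= r.
Proof.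
move=> u0 ur; apply: ge_sup; first exact: ne_set.
move=> t /= Ht; rewrite leNgt; apply/negP => rt.
have := le_lt_trans (@Hmono _ _ (ltW rt)) (le_lt_trans Ht ur).
by rewrite ltxx.
Qed.

Lemma Tinv_mono u v : 0 <= u -> u <= v -> Tinv u <= Tinv v.
Proof.
move=> u0 uv; apply: ge_sup; first exact: ne_set.
move=> t /= Ht; apply: Tinv_ge; exact: le_trans Ht uv.
Qed.

Lemma Tinv_int (k c b : R) (f : R -> R) : 0 <= b ->
  (forall u, 0 <= u -> f u = Tinv u + (k * u + c)) ->
  mu.-integrable `[0, b] (EFin \o f).
Proof.
move=> b0 fE.
apply: measurable_bounded_integrable => //.
- have := @lebesgue_measure_itv R `[0, b]%R; rewrite /= => ->.
  by case: ifP => _; rewrite ?ltry.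
- suff H : measurable_fun (`[0, b] : set R) f by exact: H.
  refine (eq_measurable_fun (fun u : R => Tinv (Num.max u 0) + (k * u + c)) _ _).
    move=> u /set_mem; rewrite /= in_itv /= => /andP[u0 _].
    by rewrite fE // max_l.
  refine (@measurable_realfun.measurable_funD _ _ _ _ (fun u : R => Tinv (Num.max u 0)) (fun u : R => k * u + c) _ _).
    apply: measurable_realfun.nondecreasing_measurable => // x y xy; apply: Tinv_mono.
      by rewrite le_max lexx orbT.
    by rewrite ge_max !le_max xy lexx !orbT.
  refine (@measurable_realfun.measurable_funD _ _ _ _ (fun u : R => k * u) (fun u : R => c) _ _); last exact: measurable_cst.
  exact: (@measurable_realfun.measurable_funM _ _ _ _ (fun=> k) (@id R)).
- pose K := `|Tinv 0| + `|Tinv b| + `|k| * b + `|c|.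
  exists K; split; first by rewrite num_real.
  move=> M KM x /=; rewrite in_itv /= => /andP[x0 xb].
  apply: (@le_trans _ _ K); last exact: ltW.
  rewrite fE //.
  have h1 := @Tinv_mono 0 x (lexx 0) x0; have h2 := @Tinv_mono x b x0 xb.
  have h3 := ler_norm (Tinv 0); have h3' := ler_norm (- Tinv 0).
  have h4 := ler_norm (Tinv b); have h4' := ler_norm (- Tinv b).
  have h5 := ler_norm (k * x); have h5' := ler_norm (- (k * x)).
  have h6 := ler_norm c; have h6' := ler_norm (- c).
  rewrite !normrN in h3' h4' h5' h6'.
  have h7 : `|k * x| <= `|k| * b.
    by rewrite normrM (ger0_norm x0) ler_wpM2l.
  rewrite ler_norml /K; apply/andP; split; lra.
Qed.

Lemma int_s b : 0 <= b -> mu.-integrable `[0, b] (EFin \o (fun u => Tinv u - u)).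
Proof. move=> b0; apply: (@Tinv_int (-1) 0) => // u _; by rewrite mulN1r addr0. Qed.

Lemma int_phi r b : 0 <= b -> mu.-integrable `[0, b] (EFin \o (fun u => Tinv u - r)).
Proof. move=> b0; apply: (@Tinv_int 0 (- r)) => // u _; by rewrite mul0r add0r. Qed.

Lemma int_lin r b : mu.-integrable `[0, b] (EFin \o (fun u : R => u - r)).
Proof.
apply: continuous_compact_integrable; first exact: segment_compact.
apply: continuous_subspaceT => x.
by apply: cvgB; [exact: cvg_id|exact: cvg_cst].
Qed.

Lemma key1 r g : 0 <= g ->
  2^-1 * (r - g) ^+ 2 + \int[mu]_(u in `[0, g]) (Tinv u - u) =
  \int[mu]_(u in `[0, g]) (Tinv u - r) + 2^-1 * r ^+ 2.
Proof.
move=> g0.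
have -> : \int[mu]_(u in `[0, g]) (Tinv u - r) =
          \int[mu]_(u in `[0, g]) ((Tinv u - u) + (u - r)).
  by apply: eq_Rintegral => u _; rewrite subrKA.
rewrite (@RintegralD _ _ _ mu _ (fun u => Tinv u - u) (fun u => u - r)) //;
  [|exact: int_s|exact: int_lin].
rewrite Rint_lin // !Fq_E; ring.
Qed.

Lemma key2 r g : 0 <= r -> 0 <= g ->
  \int[mu]_(u in `[0, Th r]) (Tinv u - r) <= \int[mu]_(u in `[0, g]) (Tinv u - r).
Proof.
move=> r0 g0; have /andP[gs0 gsr] := @Hbnd r r0.
case: (leP (Th r) g) => [gsg|ggs].
  rewrite -subr_ge0.
  rewrite (@Rintegral_itvB _ (fun u => Tinv u - r) (BLeft 0) (BRight g) (Th r));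
    [|exact: int_phi|by rewrite bnd_simp|by rewrite bnd_simp].
  apply: Rintegral_ge0 => u /=; rewrite in_itv /= => /andP[gsu _].
  by rewrite subr_ge0; apply: Tinv_ge; exact: ltW.
rewrite -subr_le0.
rewrite (@Rintegral_itvB _ (fun u => Tinv u - r) (BLeft 0) (BRight (Th r)) g);
  [|exact: int_phi|by rewrite bnd_simp|by rewrite bnd_simp ltW].
have hint : mu.-integrable `]g, Th r[ (EFin \o (fun u => Tinv u - r)).
  apply: (@integrableS _ _ _ mu `[0, Th r]) => //; last exact: int_phi.
  move=> u /=; rewrite !in_itv /= => /andP[gu ugs]; apply/andP; split.
    exact: le_trans g0 (ltW gu).
  exact: ltW.
rewrite -Rintegral_itv_bndo_bndc //.
apply: (@le_trans _ _ (\int[mu]_(u in `]g, Th r[) (0:R))).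
  apply: le_Rintegral => //; first exact: integrable0.
  move=> u /=; rewrite in_itv /= => /andP[gu ugs].
  rewrite subr_le0; apply: Tinv_le => //; exact: le_trans g0 (ltW gu).
by rewrite Rintegral_cst // mul0r.
Qed.

Let PT (g : R) := \int[mu]_(u in `[0, `|g|]) (Tinv u - u).

Lemma mainA r g : 0 <= r -> 0 <= g ->
  2^-1 * (r - Th r) ^+ 2 + PT (Th r) <= 2^-1 * (r - g) ^+ 2 + PT g.
Proof.
move=> r0 g0; have /andP[gs0 gsr] := @Hbnd r r0.
rewrite /PT (ger0_norm gs0) (ger0_norm g0) key1 // key1 // lerD2r.
exact: key2.
Qed.

Lemma mainB r g : 0 <= r ->
  2^-1 * (r - Th r) ^+ 2 + PT (Th r) <= 2^-1 * (r - g) ^+ 2 + PT g.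
Proof.
move=> r0; case: (leP 0 g) => [g0|g0]; first exact: mainA.
apply: le_trans (@mainA r (- g) r0 _) _; first by rewrite oppr_ge0 ltW.
have -> : PT (- g) = PT g by rewrite /PT normrN.
rewrite lerD2r; apply: ler_wpM2l; first by rewrite invr_ge0 ler0n.
rewrite -subr_ge0; have -> : (r - g) ^+ 2 - (r - - g) ^+ 2 = 4 * (r * - g) by ring.
by apply: mulr_ge0 => //; apply: mulr_ge0 => //; rewrite oppr_ge0 ltW.
Qed.

Lemma mainC r g :
  2^-1 * (r - Th r) ^+ 2 + \int[mu]_(u in `[0, `|Th r|]) (sup [set t | Th t <= u] - u)
  <= 2^-1 * (r - g) ^+ 2 + \int[mu]_(u in `[0, `|g|]) (sup [set t | Th t <= u] - u).
Proof.
rewrite -/(PT (Th r)) -/(PT g).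
case: (leP 0 r) => [r0|r0]; first exact: mainB.
have r0' : 0 <= - r by rewrite oppr_ge0 ltW.
have := @mainB (- r) (- g) r0'.
have e1 : Th r = - Th (- r) by rewrite Hodd opprK.
have e2 : PT (- Th (- r)) = PT (Th (- r)) by rewrite /PT normrN.
have e3 : PT (- g) = PT g by rewrite /PT normrN.
rewrite e1 e2 e3.
have -> : (r - - Th (- r)) ^+ 2 = (- r - Th (- r)) ^+ 2 by ring.
by have -> : (r - g) ^+ 2 = (- r - - g) ^+ 2 by ring.
Qed.

End thr.
End lin.

Section mat.
Variables (R : realType) (n p : nat).

Lemma sum_sq_tr (w : 'cV[R]_n) : (w^T *m w) 0 0 = \sum_i (w i 0) ^+ 2.
Proof. by rewrite mxE; apply: eq_bigr => i _; rewrite mxE expr2. Qed.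

Lemma XtX_unit (X : 'M[R]_(n, p)) : \rank X = p -> X^T *m X \in unitmx.
Proof.
move=> hX; rewrite -row_free_unit; apply: inj_row_free => v hv.
pose w := X *m v^T.
have hw : w^T *m w = 0.
  by rewrite /w trmx_mul trmxK -mulmxA (mulmxA (X^T)) mulmxA hv mul0mx.
have w0 : w = 0.
  apply/matrixP => i j; rewrite (ord1 j) [RHS]mxE.
  have := congr1 (fun (M : 'M[R]_1) => M 0 0) hw; rewrite /= sum_sq_tr => /eqP.
  rewrite mxE psumr_eq0; last by move=> k _; exact: sqr_ge0.
  move=> /allP /(_ i (mem_index_enum _)) /implyP /(_ isT).
  by rewrite sqrf_eq0 => /eqP.
have : v *m X^T = 0 by rewrite -[v]trmxK -trmx_mul -/w w0 trmx0.
move/eqP; rewrite mulmx_free_eq0 => [/eqP //|].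
by rewrite /row_free mxrank_tr hX.
Qed.

Lemma ols_min (X : 'M[R]_(n, p)) (y gam : 'cV[R]_n) (b : 'cV[R]_p) : \rank X = p ->
  \sum_i ((y - X *m ols_beta X y gam - gam) i 0) ^+ 2 <=
  \sum_i ((y - X *m b - gam) i 0) ^+ 2.
Proof.
move=> hX; set bs := ols_beta X y gam.
set e := y - gam - X *m bs; set d := X *m (bs - b).
have E1 : y - X *m bs - gam = e by rewrite /e addrAC.
have E2 : y - X *m b - gam = e + d.
  by rewrite /e /d mulmxBr addrA subrK addrAC.
have hXe : X^T *m e = 0.
  rewrite /e /bs /ols_beta mulmxBr !mulmxA mulmxV ?XtX_unit // mul1mx subrr //.
have heX : e^T *m X = 0.
  by rewrite -(trmxK (e^T *m X)) trmx_mul trmxK hXe trmx0.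
have ed : \sum_i e i 0 * d i 0 = 0.
  have -> : \sum_i e i 0 * d i 0 = (e^T *m d) 0 0.
    by rewrite [RHS]mxE; apply: eq_bigr => i _; rewrite [e^T 0 i]mxE.
  by rewrite /d mulmxA heX mul0mx mxE.
rewrite E1 E2.
have -> : \sum_i ((e + d) i 0) ^+ 2 =
   \sum_i (e i 0) ^+ 2 + (2 * \sum_i e i 0 * d i 0 + \sum_i (d i 0) ^+ 2).
  rewrite mulr_sumr -!big_split; apply: eq_bigr => i _; rewrite [(e + d) i 0]mxE /=; ring.
rewrite ed mulr0 add0r lerDl; apply: sumr_ge0 => i _; exact: sqr_ge0.
Qed.
End mat.

Lemma hsub (R : realType) (n : nat) (A B : 'cV[R]_n) i : (A - B) i 0 = A i 0 - B i 0.
Proof. by rewrite !mxE. Qed.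

Theorem theorem1 (R : realType) (n p : nat)
  (Theta : R -> R -> R) (P q : R -> R -> R)
  (X : 'M[R]_(n, p)) (y : 'cV[R]_n) (lam : 'I_n -> R) (gam0 : 'cV[R]_n)
  (hTheta : is_threshold Theta)
  (hq_nonneg : forall l theta, 0 <= l -> 0 <= q theta l)
  (hq_zero : forall l theta, 0 <= l -> q (Theta theta l) l = 0)
  (hP : forall l theta, 0 <= l ->
          P theta l - P 0 l = P_Theta Theta theta l + q theta l)
  (hX : \rank X = p)
  (hlam : forall i, 0 <= lam i) :
  forall j : nat,
    f_P P X y lam (ipod_beta Theta X y lam gam0 j) (ipod_gamma Theta X y lam gam0 j)
      >= f_P P X y lam (ipod_beta Theta X y lam gam0 j) (ipod_gamma Theta X y lam gam0 j.+1)
    /\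
    f_P P X y lam (ipod_beta Theta X y lam gam0 j) (ipod_gamma Theta X y lam gam0 j.+1)
      >= f_P P X y lam (ipod_beta Theta X y lam gam0 j.+1) (ipod_gamma Theta X y lam gam0 j.+1).
Proof.
move=> j; split.
- rewrite /f_P.
  set b := ipod_beta Theta X y lam gam0 j.
  set gam := ipod_gamma Theta X y lam gam0 j.
  have -> : ipod_gamma Theta X y lam gam0 j.+1 =
            \col_i Theta ((y - X *m b) i 0) (lam i) by [].
  set r := y - X *m b.
  rewrite !mulr_sumr -!big_split /=; apply: ler_sum => i _.
  rewrite !hsub mxE.
  have [Hodd Hmono Hcvg Hbnd] := hTheta (lam i) (hlam i).
  have hm : 2^-1 * (r i 0 - Theta (r i 0) (lam i)) ^+ 2
              + P_Theta Theta (Theta (r i 0) (lam i)) (lam i)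
            <= 2^-1 * (r i 0 - gam i 0) ^+ 2 + P_Theta Theta (gam i 0) (lam i).
    exact: (@mainC R (fun t => Theta t (lam i)) Hodd Hmono Hcvg Hbnd (r i 0) (gam i 0)).
  have h1 := hP (lam i) (Theta (r i 0) (lam i)) (hlam i).
  rewrite hq_zero // in h1.
  have h2 := hP (lam i) (gam i 0) (hlam i).
  have hq := hq_nonneg (lam i) (gam i 0) (hlam i).
  have er : r i 0 = y i 0 - (X *m b) i 0 by rewrite /r hsub.
  rewrite -er; lra.
- rewrite /f_P lerD2r; apply: ler_wpM2l; first by rewrite invr_ge0 ler0n.
  exact: ols_min.
Qed.
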